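(* Let $G=(V,E)$ be a connected graph on $n\geq 4$ vertices with $V=\{p_1,\ldots,p_{n-1},q\}$, where $p_1-p_2-\cdots-p_{n-1}$ is a path in $G$. If $\psi_{n-1}(G)=2$ and $\psi_n(G)=0$, then $2\leq d(q)\leq \left\lceil\frac{n-3}{2}\right\rceil$.
   Context: All graphs are finite and simple. For a graph $G$ and a positive integer $k$, a $k$-path vertex cover ($k$-PVC) of $G$ is a set $S$ of vertices such that every path on $k$ vertices in $G$ contains at least one vertex of $S$ (if $G$ has no path on $k$ vertices, the empty set is a $k$-PVC). $\psi_k(G)$ denotes the minimum cardinality of a $k$-PVC of $G$. $d(v)$ is the degree of a vertex $v$. *)

(* Defs.v *)
(* A simple graph is a symmetric irreflexive relation e on a finType T. *)
From mathcomp Require Import all_boot.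
Set Implicit Arguments. Unset Strict Implicit. Unset Printing Implicit Defensive.

Section PVC.
Variables (T : finType) (e : rel T).

Definition kpath (k : nat) (t : k.-tuple T) : bool := uniq t && sorted e t.

Definition is_kpvc (k : nat) (S : {set T}) : bool :=
  [forall t : k.-tuple T, kpath t ==> has (fun x => x \in S) t].

(* psi_k(G): minimum cardinality of a k-PVC (setT is one for k >= 1) *)
Definition psi (k : nat) : nat :=
  \big[minn/#|T|]_(S : {set T} | is_kpvc k S) #|S|.

Definition deg (v : T) : nat := #|[set u | e v u]|.

Definition connected_graph : Prop := forall x y : T, connect e x y.
End PVC.

(* Main.v *)
Require Import Defs.
From mathcomp Require Import all_boot zify.
Set Implicit Arguments. Unset Strict Implicit. Unset Printing Implicit Defensive.

Lemma psi_le (T : finType) (e : rel T) k (S : {set T}) :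
  is_kpvc e k S -> psi e k <= #|S|.
Proof.
move=> HS; rewrite /psi.
have : S \in index_enum {set T} by rewrite mem_index_enum.
elim: (index_enum _) => [|i r IH] //; rewrite inE big_cons.
case/orP => [/eqP <-|Hr]; first by rewrite HS geq_minl.
case: ifP => _; last exact: IH.
exact: leq_trans (geq_minr _ _) (IH Hr).
Qed.

Lemma psi_ge1 (T : finType) (e : rel T) k (t : k.-tuple T) :
  kpath e t -> 0 < #|T| -> 0 < psi e k.
Proof.
move=> Ht HT; rewrite /psi; apply: (big_ind (fun m => 0 < m)) => //.
  by move=> x y; rewrite leq_min => -> ->.
move=> S /forallP/(_ t); rewrite Ht /= => /hasP[x xt xS].
by apply/card_gt0P; exists x.
Qed.

Lemma nbr_in_path (T : eqType) (e : rel T) (s : seq T) x :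
  sorted e s -> x \in s -> 1 < size s -> exists2 y, y \in s & (e x y || e y x).
Proof.
elim: s => [|a s IH] //=.
case: s IH => [|b s] IH //= /andP[eab Hs].
rewrite inE => /orP[/eqP->|xs] _; first by exists b; rewrite ?inE ?eqxx ?orbT ?eab.
case: s IH Hs xs => [|c s] IH Hs xs.
  move: xs; rewrite inE => /eqP->; exists a; rewrite ?inE ?eqxx ?eab ?orbT //.
have [y ys Hy] := IH Hs xs (isT).
by exists y; rewrite // inE ys orbT.
Qed.

Lemma indep_bound (b : nat -> bool) m :
  (forall k, b k -> ~~ b k.+1) -> 2 * \sum_(0 <= k < m) b k <= m + 1.
Proof.
move=> Hb; elim: m {-2}m (leqnn m) => [|M IH] m Hm.
  by move: Hm; rewrite leqn0 => /eqP->; rewrite big_geq.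
case: m Hm => [|[|m]] Hm; first by rewrite big_geq.
  by rewrite big_nat1; case: (b 0).
rewrite !big_nat_recr //=.
have := IH m (ltnW Hm).
have := Hb m; case: (b m); case: (b m.+1) => //= H; try lia.
Qed.

Theorem mainTheorem12 (T : finType) (e : rel T) (n : nat)
  (p : 'I_(n - 1) -> T) (q : T) :
  symmetric e -> irreflexive e ->
  4 <= n -> #|T| = n ->
  connected_graph e ->
  injective p -> (forall i, p i != q) ->
  (forall i j : 'I_(n - 1), nat_of_ord j = i.+1 -> e (p i) (p j)) ->
  psi e (n - 1) = 2 -> psi e n = 0 ->
  2 <= deg e q <= (n - 2) %/ 2.
Proof.
move=> Hsym Hirr Hn HT Hconn Hinj Hne Hpath Hpsi1 Hpsi0.
pose pn k := if insub k is Some i then p i else q.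
have pnE (i : 'I_(n - 1)) : pn i = p i.
  rewrite /pn; case: insubP => [u _ Hu|]; last by rewrite ltn_ord.
  by congr p; apply: val_inj.
have pn_ne k : k < n - 1 -> pn k != q.
  by move=> Hk; rewrite -[k]/(val (Ordinal Hk)) pnE.
have pn_inj k l : k < n - 1 -> l < n - 1 -> pn k = pn l -> k = l.
  move=> Hk Hl; rewrite -[k]/(val (Ordinal Hk)) -[l]/(val (Ordinal Hl)) !pnE.
  by move/Hinj => ->.
have pn_e k : k.+1 < n - 1 -> e (pn k) (pn k.+1).
  move=> Hk; have Hk' : k < n - 1 by lia.
  rewrite -[k]/(val (Ordinal Hk')) -[k.+1]/(val (Ordinal Hk)) !pnE.
  exact: Hpath.
have NQ x : x < n - 1 -> pn x = q -> False.
  by move=> /pn_ne /eqP.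
(* no Hamiltonian path *)
have Ham j : j <= n - 1 -> (0 < j -> e (pn j.-1) q) -> (j < n - 1 -> e q (pn j)) -> False.
  move=> Hj H1 H2.
  pose g k := if k == j then q else pn (if k < j then k else k.-1).
  pose s := map g (iota 0 n).
  have Hs : size s == n by rewrite size_map size_iota.
  have Hu : uniq s.
    rewrite map_inj_in_uniq ?iota_uniq // => k l; rewrite !mem_iota /= => Hk Hl.
    rewrite /g; case: (ltngtP k j) => Hkj; case: (ltngtP l j) => Hlj //= => E;
    first [ (have := pn_inj _ _ _ _ E; lia)
          | (exfalso; apply: (NQ k) E; lia)
          | (exfalso; apply: (NQ k.-1) E; lia)
          | (exfalso; apply: (NQ l) (esym E); lia)
          | (exfalso; apply: (NQ l.-1) (esym E); lia)
          | lia ].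
  have Hso : sorted e s.
    apply/(sortedP q) => k; rewrite size_map size_iota => Hk.
    rewrite !(nth_map 0) ?size_iota ?nth_iota; try lia.
    rewrite /= /g; case: (ltngtP k j) => Hkj; case: (ltngtP k.+1 j) => Hkj1 //=; try lia;
    rewrite ?add0n;
    first [ (apply: pn_e; lia)
          | (move: H1; rewrite -Hkj1 /=; by apply)
          | (have := pn_e k.-1; rewrite prednK; [apply; lia | lia])
          | (rewrite Hkj; apply: H2; lia) ].
  have : kpath e (Tuple Hs) by apply/andP.
  move/psi_ge1; rewrite HT Hpsi0; lia.
have pn_out k : n - 1 <= k -> pn k = q.
  by move=> Hk; rewrite /pn; case: insubP => [u Hu _|//]; move: Hu; rewrite ltnNge Hk.
have cover u : u != q -> exists i, u = p i.
  move=> Huq; case: (boolP (u \in codom p)) => [/codomP//|Hu].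
  exfalso.
  have Hqc : q \notin codom p.
    by apply/negP => /codomP [i Hi]; move: (Hne i); rewrite -Hi eqxx.
  have U : uniq (u :: q :: codom p).
    rewrite /= inE negb_or Huq Hu Hqc /=.
    by rewrite /codom map_inj_uniq ?enum_uniq.
  move/card_uniqP: U; rewrite /= size_codom card_ord => Hc.
  have := max_card (mem (u :: q :: codom p)); rewrite Hc HT; lia.
have Hdeg : deg e q = \sum_(0 <= k < n - 1) e q (pn k).
  rewrite /deg (_ : [set u | e q u] = p @: [set i | e q (p i)]); last first.
    apply/setP => u; rewrite inE; apply/idP/imsetP.
      move=> Hu; have Huq : u != q by apply: contraTneq Hu => ->; rewrite Hirr.
      by have [i Ei] := cover u Huq; exists i; rewrite // inE -Ei.
    by case=> i; rewrite inE => Hi ->.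
  rewrite card_imset // -sum1_card big_mkcond big_mkord /=.
  by apply: eq_bigr => i _; rewrite inE pnE; case: (e q (p i)).
have Hd0 : 0 < deg e q.
  have Hq0 : pn 0 != q by apply: pn_ne; lia.
  move/connectP: (Hconn q (pn 0)) => [[|a s'] /= Hp Hl]; first by rewrite Hl eqxx in Hq0.
  by move: Hp => /andP[Ha _]; apply/card_gt0P; exists a; rewrite inE.
have Hd1 : deg e q != 1.
  rewrite /deg; apply/negP => /cards1P [v Hv].
  have : v \in [set u | e q u] by rewrite Hv set11.
  rewrite inE => Hqv.
  have Hcov : is_kpvc e (n - 1) [set v].
    apply/forallP => t; apply/implyP => /andP[Hu Hs]; apply/hasP.
    case: (boolP (v \in t)) => [vt|vnt]; first by exists v; rewrite ?inE.
    exfalso.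
    have qt : q \in t.
      apply/negPn/negP => qnt.
      have Hvq : v != q by apply/eqP => E; rewrite E Hirr in Hqv.
      have U : uniq (v :: q :: t) by rewrite /= inE negb_or vnt qnt Hu Hvq.
      move/card_uniqP: U; rewrite /= size_tuple => Hc.
      have := max_card (mem (v :: q :: t)); rewrite Hc HT; lia.
    have [y yt Hy] := nbr_in_path Hs qt (ltac:(rewrite size_tuple; lia)).
    have : y \in [set u | e q u] by rewrite inE; move: Hy; rewrite (Hsym y q) orbb.
    by rewrite Hv inE => /eqP Ey; rewrite -Ey yt in vnt.
  have := psi_le Hcov; rewrite Hpsi1 cards1; lia.
have F0 : e q (pn 0) = false.
  apply/negP => H; apply: (Ham 0) => //.
have F1 : e q (pn (n - 2)) = false.
  apply/negP => H; apply: (Ham (n - 1)) => //; last by rewrite ltnn.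
  by move=> _; rewrite Hsym (_ : (n - 1).-1 = n - 2) //; lia.
have Hb : forall k, e q (pn k.+1) -> ~~ e q (pn k.+2).
  move=> k H; apply/negP => H'.
  case: (ltnP k.+2 (n - 1)) => Hk.
    apply: (Ham k.+2) => //; first lia.
    by move=> _; rewrite Hsym.
  by move: H'; rewrite pn_out // Hirr.
have := @indep_bound (fun k => e q (pn k.+1)) (n - 3) Hb.
move: Hdeg; rewrite (_ : n - 1 = (n - 3).+2); last lia.
rewrite big_nat_recl // big_nat_recr //= F0 (_ : (n - 3).+1 = n - 2); last lia.
rewrite F1 => Hdeg.
move: Hd0 Hd1; rewrite Hdeg; lia.
Qed.
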